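(* Let $(G_n)$ be a sequence of graphs with $\min_{u\in V}\delta_u=\omega(\log n)$, fix $p\in[0,1]$, and for each $n$ run the $(p,\mathcal B)$-Node-Deterministic-Majority dynamics on $G_n$ from the configuration in which every node is $\mathcal R$. (Fast disruption) If $p>1/2$, then $\Pr(\mathrm{vol}(B^{(2)})=\mathrm{vol}(V))=1-o(1)$ and $\Pr(\tau=1)=1-o(1)$. (Slow disruption) If $p<1/2$, then with $c=1/2-p$, for every $K>0$, $\Pr\big(\forall t\le n^K:\ \mathrm{vol}(R^{(t)})\ge\frac{1+c}{2}\mathrm{vol}(V)\big)=1-o(1)$, and consequently $\Pr(\tau>n^K)=1-o(1)$.
   Context: $G_n=(V,E)$, $V=\{1,\dots,n\}$, $N(u)$ neighbourhood, $\delta_u=|N(u)|$, $\mathrm{vol}(S)=\sum_{v\in S}\delta_v$; asymptotics as $n\to\infty$. States in $\{\mathcal R,\mathcal B\}$; $R^{(t)},B^{(t)}$ are the sets of nodes in each state at round $t$, and $\tau=\inf\{t\ge0:\mathrm{vol}(B^{(t)})/\mathrm{vol}(V)>1/2\}$. $(p,\mathcal B)$-Node-Deterministic-Majority: in each round $t\ge1$, every node $u$ independently takes state $\mathcal B$ with probability $p$; otherwise it adopts the state held at round $t-1$ by the majority of its whole neighbourhood (ties broken by some fixed rule, e.g. uniformly at random). *)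

(* Defs.v *)
From HB Require Import structures.
From mathcomp Require Import all_boot all_order all_algebra.

Set Implicit Arguments. Unset Strict Implicit. Unset Printing Implicit Defensive.
Import Order.TTheory GRing.Theory Num.Theory.
Local Open Scope ring_scope.

Section NDM.
Variables (R : realFieldType) (n : nat) (G : rel 'I_n).

Definition nbh (u : 'I_n) : {set 'I_n} := [set v | G u v].
Definition deg (u : 'I_n) : nat := #|nbh u|.
Definition vol (S : {set 'I_n}) : nat := (\sum_(v in S) deg v)%N.

(* A configuration is represented by the set of nodes in state B;
   the R nodes are its complement. *)
Definition nbB (S : {set 'I_n}) (u : 'I_n) : nat := #|nbh u :&: S|.
Definition nbR (S : {set 'I_n}) (u : 'I_n) : nat := #|nbh u :\: S|.

Variables (p : R) (beta : 'I_n -> {set 'I_n} -> R).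
(* beta u S = probability that node u adopts B when its neighbourhood is tied
   in configuration S (the fixed tie-breaking rule). *)

Definition majB (S : {set 'I_n}) (u : 'I_n) : R :=
  if (nbR S u < nbB S u)%N then 1
  else if (nbB S u < nbR S u)%N then 0
  else beta u S.
Definition qB (S : {set 'I_n}) (u : 'I_n) : R := p + (1 - p) * majB S u.

Definition kernel (S S' : {set 'I_n}) : R :=
  \prod_(u : 'I_n) (if u \in S' then qB S u else 1 - qB S u).

Fixpoint path_weight (x : {set 'I_n}) (s : seq {set 'I_n}) : R :=
  if s is y :: s' then kernel x y * path_weight y s' else 1.

(* Probability of an event E on the trajectory (B^(0), ..., B^(T)) started
   from B^(0) = set0 (all nodes R). *)
Definition Pr_traj (T : nat) (E : seq {set 'I_n} -> bool) : R :=
  \sum_(s : T.-tuple {set 'I_n}) (E (set0 :: s))%:R * path_weight set0 s.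

Definition Bset (x : seq {set 'I_n}) (t : nat) : {set 'I_n} := nth set0 x t.
Definition Rset (x : seq {set 'I_n}) (t : nat) : {set 'I_n} := ~: Bset x t.

Definition hit (x : seq {set 'I_n}) (t : nat) : bool :=
  (vol [set: 'I_n] < 2 * vol (Bset x t))%N.
Definition tau_eq (x : seq {set 'I_n}) (t : nat) : bool :=
  hit x t && [forall s : 'I_t, ~~ hit x s].
Definition tau_gt (x : seq {set 'I_n}) (T : nat) : bool :=
  [forall s : 'I_T.+1, ~~ hit x s].

End NDM.

(* Main.v *)
Require Import Defs.
From HB Require Import structures.
From mathcomp Require Import all_boot all_order all_algebra.
From mathcomp Require Import all_classical all_reals all_analysis.
Import Order.TTheory GRing.Theory Num.Theory.
Import numFieldTopology.Exports numFieldNormedType.Exports.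
Local Open Scope classical_set_scope.
Local Open Scope ring_scope.
From mathcomp Require Import ring lra.
Set Implicit Arguments. Unset Strict Implicit.

Definition W (R : realType) n (G : rel 'I_n) (p : R) beta (T : nat) (x : {set 'I_n})
  (E : seq {set 'I_n} -> bool) : R :=
  \sum_(s : T.-tuple {set 'I_n}) (E (x :: s))%:R * path_weight G p beta x s.

Lemma big_tuple_cons (R : realType) (X : finType) (T : nat) (F : T.+1.-tuple X -> R) :
  \sum_(s : T.+1.-tuple X) F s = \sum_(y : X) \sum_(s : T.-tuple X) F [tuple of y :: s].
Proof.
rewrite pair_big /=.
rewrite (reindex (fun ys : X * T.-tuple X => [tuple of ys.1 :: ys.2])) //=.
exists (fun t : T.+1.-tuple X => (thead t, [tuple of behead t])).
  by move=> [y s] _ /=; congr pair; apply: val_inj.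
by move=> t _; rewrite [RHS](tuple_eta t).
Qed.

Lemma big_tuple0 (R : realType) (X : finType) (F : 0.-tuple X -> R) :
  \sum_(s : 0.-tuple X) F s = F [tuple].
Proof.
rewrite (big_pred1 [tuple]) // => t /=; apply/esym/eqP; exact: tuple0.
Qed.


Lemma prod_sum (R : realType) n (F G : 'I_n -> R) :
  \sum_(y : {set 'I_n}) \prod_u (if u \in y then F u else G u) = \prod_u (F u + G u).
Proof. by rewrite bigA_distr. Qed.

Lemma aux01 (R : realFieldType) (p m : R) : 0 <= p -> p <= 1 -> 0 <= m -> m <= 1 ->
  0 <= p + (1 - p) * m <= 1.
Proof. move=> *.
have h2 : 0 <= (1 - p) * m by apply: mulr_ge0 => //; lra.
have h3 : 0 <= (1 - p) * (1 - m) by apply: mulr_ge0; lra.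
apply/andP; split; nra. Qed.

Section A.
Context (R : realType) (n : nat) (G : rel 'I_n) (p : R) (beta : 'I_n -> {set 'I_n} -> R).
Context (hp0 : 0 <= p) (hp1 : p <= 1) (hb : forall u S, 0 <= beta u S <= 1).

Lemma majB_01 S u : 0 <= majB G beta S u <= 1.
Proof. rewrite /majB; case: ifP => _; first by rewrite ler01 lexx. case: ifP => _ //.
by rewrite lexx ler01. Qed.

Lemma qB_01 S u : 0 <= qB G p beta S u <= 1.
Proof. rewrite /qB; have /andP[h0 h1] := majB_01 S u.
exact: aux01.
Qed.

Lemma kernel_ge0 S S' : 0 <= Defs.kernel G p beta S S'.
Proof. rewrite /Defs.kernel; apply: prodr_ge0 => u _; have /andP[h0 h1] := qB_01 S u.
by case: ifP => _ //; rewrite subr_ge0. Qed.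

Lemma kernel_sum1 S : \sum_S' Defs.kernel G p beta S S' = 1.
Proof. rewrite /Defs.kernel prod_sum; apply: big1 => u _; by rewrite addrC subrK. Qed.

Lemma pw_ge0 x s : 0 <= path_weight G p beta x s.
Proof. elim: s x => [|y s IH] x /=; first exact: ler01.
by apply: mulr_ge0; [exact: kernel_ge0 | exact: IH]. Qed.

Lemma W_cons T x E : W G p beta T.+1 x E =
  \sum_y Defs.kernel G p beta x y * W G p beta T y (fun s => E (x :: s)).
Proof.
rewrite /W big_tuple_cons; apply: eq_bigr => y _; rewrite big_distrr.
by apply: eq_bigr => s _ /=; rewrite mulrCA.
Qed.

Lemma W_nil x E : W G p beta 0 x E = (E [:: x])%:R.
Proof. by rewrite /W big_tuple0 /= mulr1. Qed.

Lemma W_ge0 T x E : 0 <= W G p beta T x E.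
Proof. by apply: sumr_ge0 => s _; apply: mulr_ge0 => //; exact: pw_ge0. Qed.

Lemma W_le T x (E E' : seq {set 'I_n} -> bool) : (forall s, E s -> E' s) ->
  W G p beta T x E <= W G p beta T x E'.
Proof.
move=> h; apply: ler_sum => s _; apply: ler_wpM2r; first exact: pw_ge0.
by case: (E _) (h (x :: s)) => //= ->.
Qed.

Lemma W_total T x : W G p beta T x (fun _ => true) = 1.
Proof.
elim: T x => [|T IH] x; first by rewrite W_nil.
rewrite W_cons -[RHS](kernel_sum1 x); apply: eq_bigr => y _; by rewrite IH mulr1.
Qed.

Lemma W_compl T x E : W G p beta T x E = 1 - W G p beta T x (fun s => ~~ E s).
Proof.
rewrite -(W_total T x) /W -sumrB; apply: eq_bigr => s _.
by case: (E _) => /=; rewrite ?mul1r ?mul0r ?subr0 ?subrr.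
Qed.

Lemma W_le1 T x E : W G p beta T x E <= 1.
Proof. by rewrite -(W_total T x); apply: W_le. Qed.

Lemma kernel_lb x (V : {set 'I_n} -> R) (P : pred {set 'I_n}) :
  (forall y, 0 <= V y) -> (forall y, P y -> 1 <= V y) ->
  1 - \sum_y Defs.kernel G p beta x y * (~~ P y)%:R <= \sum_y Defs.kernel G p beta x y * V y.
Proof.
move=> h0 h1; rewrite -{1}(kernel_sum1 x) -sumrB; apply: ler_sum => y _.
case: (boolP (P y)) => Py /=; rewrite ?mulr0 ?subr0 ?mulr1 ?subrr.
  by rewrite -[X in X <= _]mulr1 ler_wpM2l ?kernel_ge0 ?h1.
by rewrite mulr_ge0 ?kernel_ge0 ?h0.
Qed.

End A.

Lemma expR_small (R : realType) (l : R) : 0 <= l -> l <= 1/2 -> expR l <= 1 + l + 2 * l ^+ 2.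
Proof.
move=> l0 l1; have h := expR_ge1Dx (- l); have e := expRxMexpNx_1 l.
have E0 := expR_gt0 l.
move: (expR l) (expR (- l)) h e E0 => E F h e E0.
have h2 : E * (1 - l) <= 1 by rewrite -e; apply: ler_wpM2l; lra.
have h3 : 0 <= l ^+ 2 * (1 - 2 * l) by apply: mulr_ge0; [exact: sqr_ge0 | lra].
nra.
Qed.

Lemma chernoff_key (R : realType) (r g e d : R) : 0 <= r -> r <= 1 -> 0 < g -> g <= 2 ->
  1 <= e -> e <= 1 + g/4 + 2 * (g/4) ^+ 2 -> 0 <= d ->
  - (g / 4 * ((r + g) * d)) + d * r * (e - 1) <= - (g ^+ 2 / 8) * d.
Proof.
move=> r0 r1 g0 g2 e1 e2 d0.
have h1 : r * (e - 1) <= r * (g/4 + 2 * (g/4) ^+ 2) by apply: ler_wpM2l => //; lra.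
have h2 : r * (2 * (g/4) ^+ 2) <= 2 * (g/4) ^+ 2.
  rewrite -[X in _ <= X]mul1r; apply: ler_wpM2r => //; apply: mulr_ge0 => //; exact: sqr_ge0.
have key : - (g / 4 * (r + g)) + r * (e - 1) <= - (g ^+ 2 / 8).
  have -> : - (g ^+ 2 / 8) = - (g / 4 * g) + 2 * (g/4) ^+ 2 by rewrite !expr2; field.
  nra.
have := ler_wpM2r d0 key; nra.
Qed.

Lemma card_expR (R : realType) n (A : {set 'I_n}) (l : R) :
  expR (l * #|A|%:R) = \prod_u (if u \in A then expR l else 1).
Proof.
rewrite -sumr_const mulr_sumr expR_sum big_mkcond /=.
by apply: eq_bigr => u _; rewrite mulr1.
Qed.

Lemma chernoff_bd (R : realType) n (a b : 'I_n -> R) (N : {set 'I_n}) (r g : R) :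
  (forall u, 0 <= a u) -> (forall u, 0 <= b u) -> (forall u, a u + b u = 1) ->
  (forall u, u \in N -> a u <= r) -> 0 <= r -> r <= 1 -> 0 < g -> g <= 2 ->
  \sum_(y : {set 'I_n}) (\prod_u (if u \in y then a u else b u)) *
     ((r + g) * #|N|%:R <= #|N :&: y|%:R)%R%:R
  <= expR (- (g ^+ 2 / 8) * #|N|%:R).
Proof.
move=> a0 b0 ab aN r0 r1 g0 g2.
set l := g / 4; set d := #|N|%:R; set A := (r + g) * d.
have l0 : 0 <= l by rewrite /l; lra.
have l1 : l <= 1/2 by rewrite /l; lra.
pose gN u := if u \in N then expR l else 1.
have step1 y : (A <= #|N :&: y|%:R)%R%:R <=
    expR (- (l * A)) * \prod_u (if u \in y then gN u else 1).
  have -> : \prod_u (if u \in y then gN u else 1) = expR (l * #|N :&: y|%:R).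
    rewrite card_expR; apply: eq_bigr => u _; rewrite /gN !inE.
    by case: (u \in N); case: (u \in y).
  rewrite -(expRD (- (l * A))); case: (boolP (A <= _)) => hA /=; last exact: expR_ge0.
  apply: le_trans (expR_ge1Dx _); rewrite lerDl.
  have : 0 <= l * (#|N :&: y|%:R - A) by apply: mulr_ge0 => //; rewrite subr_ge0.
  lra.
have step2 : \sum_(y : {set 'I_n}) (\prod_u (if u \in y then a u else b u)) *
     (A <= #|N :&: y|%:R)%R%:R <=
   expR (- (l * A)) * \prod_u (a u * gN u + b u).
  rewrite -prod_sum big_distrr /=; apply: ler_sum => y _.
  apply: le_trans (ler_wpM2l _ (step1 y)) _.
    apply: prodr_ge0 => u _; by case: ifP.
  rewrite mulrCA; apply: ler_wpM2l; first exact: expR_ge0.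
  rewrite -big_split /=; apply: ler_prod => u _; case: ifP => _; rewrite ?mulr1 //.
  1,2: rewrite lexx andbT //.
  apply: mulr_ge0 => //; rewrite /gN; case: ifP => _ //; exact: expR_ge0.
have eb : 1 <= expR l by apply: le_trans _ (expR_ge1Dx l); rewrite lerDl.
have step3 : \prod_u (a u * gN u + b u) <= expR (d * (r * (expR l - 1))).
  rewrite /d mulrC card_expR; apply: ler_prod => u _; rewrite /gN.
  case: ifP => uN.
    apply/andP; split; first by apply: addr_ge0 => //; apply: mulr_ge0 => //; exact: expR_ge0.
    apply: le_trans (expR_ge1Dx _); have := aN u uN; have := ab u; have := a0 u.
    move: (a u) (b u) => x z h1 h2 h3.
    have : x * (expR l - 1) <= r * (expR l - 1) by apply: ler_wpM2r => //; lra.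
    lra.
  by rewrite mulr1 ab ler01 lexx.
apply: le_trans step2 _.
apply: le_trans (ler_wpM2l (expR_ge0 _) step3) _.
rewrite -(@expRD R) ler_expR.
have := chernoff_key r0 r1 g0 g2 eb (expR_small l0 l1) (ler0n _ #|N|).
by rewrite -/l -/d -/A mulrA.
Qed.

Lemma nbBR n (G : rel 'I_n) S u : (nbB G S u + nbR G S u)%N = deg G u.
Proof. by rewrite /nbB /nbR /deg cardsID. Qed.

Lemma card_nbh n (G : rel 'I_n) v : #|nbh G v| = (\sum_u G v u)%N.
Proof. rewrite -sum1_card big_mkcond; apply: eq_bigr => u _; rewrite /nbh !inE; by case: (G v u). Qed.

Lemma vol_nbB n (G : rel 'I_n) (Gsym : symmetric G) S : vol G S = (\sum_u nbB G S u)%N.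
Proof.
rewrite /vol /deg /nbB.
transitivity (\sum_v \sum_u ((v \in S) && G v u) : nat)%N.
  rewrite big_mkcond; apply: eq_bigr => v _; rewrite card_nbh.
  by case: (v \in S) => //=; rewrite big1.
rewrite exchange_big; apply: eq_bigr => u _.
rewrite -sum1_card [RHS]big_mkcond; apply: eq_bigr => v _; rewrite /nbh !inE Gsym andbC.
by case: (_ && _).
Qed.

Lemma vol_split n (G : rel 'I_n) S : (vol G (~: S) + vol G S)%N = vol G [set: 'I_n]%SET.
Proof.
rewrite /vol !(big_mkcond (fun i => i \in _)) -big_split; apply: eq_bigr => i _.
rewrite !inE; case: (i \in S) => /=; [exact: add0n | exact: addn0].
Qed.

Lemma vol_setT n (G : rel 'I_n) : vol G [set: 'I_n]%SET = (\sum_u deg G u)%N.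
Proof. by rewrite /vol; apply: eq_bigl => u; rewrite inE. Qed.

Lemma qB_maj0 (R : realType) n (G : rel 'I_n) (p : R) beta S u :
  (nbB G S u < nbR G S u)%N -> qB G p beta S u = p.
Proof. by move=> h; rewrite /qB /majB ltnNge (ltnW h) /= h mulr0 addr0. Qed.

Lemma qB_maj1 (R : realType) n (G : rel 'I_n) (p : R) beta S u :
  (nbR G S u < nbB G S u)%N -> qB G p beta S u = 1.
Proof. move=> h; rewrite /qB /majB h mulr1; by rewrite addrC subrK. Qed.

Definition good (R : realType) n (G : rel 'I_n) (c : R) (S : {set 'I_n}) : bool :=
  [forall u, (nbB G S u)%:R <= (1 - c) / 2 * (deg G u)%:R].

Lemma arith_lt (R : realType) (x y d c : R) : x + y = d -> x <= (1 - c) / 2 * d -> 0 < c -> 0 < d -> x < y.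
Proof. move=> h1 h2 h3 h4; have : 0 < c * d by apply: mulr_gt0. nra. Qed.

Lemma arith_thr (R : realType) (p c : R) : c = 1/2 - p -> (1 - c) / 2 = p + c / 2.
Proof. move=> ->; lra. Qed.

Lemma sum_neg_le (R : realType) n (P : pred 'I_n) :
  (~~ [forall u, P u])%:R <= \sum_u (~~ P u)%:R :> R.
Proof.
case: (boolP [forall u, P u]) => h /=; first by apply: sumr_ge0 => u _; exact: ler0n.
move/forallPn: h => [u hu]; rewrite (bigD1 u) //= hu lerDl.
by apply: sumr_ge0 => v _; exact: ler0n.
Qed.

Definition epsS (R : realType) n (G : rel 'I_n) (g : R) : R :=
  \sum_u expR (- (g ^+ 2 / 8) * (deg G u)%:R).

Lemma epsS_ge0 (R : realType) n (G : rel 'I_n) (g : R) : 0 <= epsS G g.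
Proof. by apply: sumr_ge0 => u _; exact: expR_ge0. Qed.

Lemma arith_half (R : realType) (c : R) : c <= 4 -> c / 2 <= 2.
Proof. move=> h; lra. Qed.

Lemma arith_sub (R : realType) (a b : R) : a <= b -> 1 - b <= 1 - a.
Proof. move=> h; lra. Qed.

Lemma arith_volR (R : realType) (a b t c : R) : a + b = t -> b <= (1 - c) / 2 * t -> (1 + c) / 2 * t <= a.
Proof. move=> h1 h2; lra. Qed.

Lemma arith_hit (R : realType) (b t c : R) : 0 <= c -> 0 <= t -> b <= (1 - c) / 2 * t -> 2 * b <= t.
Proof. move=> h0 h1 h2; have : 0 <= c * t by apply: mulr_ge0. lra. Qed.

Section Slow.
Context (R : realType) (n : nat) (G : rel 'I_n) (p : R) (beta : 'I_n -> {set 'I_n} -> R).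
Context (hp0 : 0 <= p) (hp1 : p <= 1) (hb : forall u S, 0 <= beta u S <= 1).
Context (c : R) (hcp : c = 1/2 - p) (hc0 : 0 < c) (hc1 : c <= 1) (hc2 : c <= 4).
Context (hdeg : forall u, (0 < deg G u)%N).

Lemma good_set0 : good G c (finset.set0 : {set 'I_n}).
Proof.
apply/forallP => u; rewrite /nbB finset.setI0 cards0; apply: mulr_ge0 => //.
apply: divr_ge0 => //; by rewrite subr_ge0.
Qed.

Lemma good_kernel S y : good G c S ->
  Defs.kernel G p beta S y = \prod_u (if u \in y then p else 1 - p).
Proof.
move=> /forallP hS; apply: eq_bigr => u _; rewrite qB_maj0 //.
rewrite -(ltr_nat R); apply: (arith_lt (d := (deg G u)%:R) _ (hS u) hc0).
  by rewrite -natrD nbBR.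
by rewrite ltr0n.
Qed.

Lemma bad_bound S : good G c S ->
  \sum_y Defs.kernel G p beta S y * (~~ good G c y)%:R <= epsS G (c / 2).
Proof.
move=> hS.
apply: (@le_trans _ _ (\sum_y Defs.kernel G p beta S y *
   \sum_u ((p + c / 2) * (deg G u)%:R <= (nbB G y u)%:R)%R%:R)) _.
  apply: ler_sum => y _; apply: ler_wpM2l; first exact: kernel_ge0.
  apply: le_trans (sum_neg_le _ _) _; apply: ler_sum => u _.
  rewrite -arith_thr // -ltNge; case: ltP => //; by move=> /ltW ->.
under eq_bigr do rewrite big_distrr.
rewrite exchange_big; apply: ler_sum => u _.
under eq_bigr do rewrite good_kernel //.
apply: (chernoff_bd (a := fun _ => p) (b := fun _ => 1 - p)) => //.
- by move=> _; rewrite subr_ge0.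
- by move=> v; rewrite addrC subrK.
- by apply: divr_gt0.
- exact: arith_half.

Qed.

Lemma W_bad T x : good G c x ->
  W G p beta T x (fun s => ~~ all (good G c) s) <= T%:R * epsS G (c / 2).
Proof.
elim: T x => [|T IH] x hx; first by rewrite W_nil /= hx /= mul0r.
rewrite W_cons.
apply: (@le_trans _ _ (\sum_y Defs.kernel G p beta x y *
   ((~~ good G c y)%:R + T%:R * epsS G (c / 2)))).
  apply: ler_sum => y _; apply: ler_wpM2l; first exact: kernel_ge0.
  apply: (@le_trans _ _ (W G p beta T y (fun s => ~~ all (good G c) s))).
    by apply: (W_le G hp0 hp1 hb) => s /=; rewrite hx.
  case: (boolP (good G c y)) => hy /=.
    by rewrite add0r; exact: IH.
  apply: le_trans (W_le1 G hp0 hp1 hb T y _) _.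
  rewrite lerDl; apply: mulr_ge0 => //; exact: epsS_ge0.
under eq_bigr do rewrite mulrDr.
rewrite big_split /= -big_distrl /= kernel_sum1 // mul1r.
rewrite -(nat1r T) mulrDl mul1r lerD2r.
exact: bad_bound.
Qed.

Lemma all_good_nth s t : all (good G c) s -> good G c (nth finset.set0 s t).
Proof.
move=> hs; case: (ltnP t (size s)) => h; first by apply: (allP hs); rewrite mem_nth.
rewrite nth_default //; exact: good_set0.
Qed.

Lemma good_volB (Gsym : symmetric G) B : good G c B ->
  (vol G B)%:R <= (1 - c) / 2 * (vol G [set: 'I_n]%SET)%:R.
Proof.
move=> /forallP hB; rewrite vol_nbB // vol_setT !natr_sum mulr_sumr.
by apply: ler_sum => u _; exact: hB.
Qed.

Lemma slow_core T (E : seq {set 'I_n} -> bool) :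
  (forall s, all (good G c) s -> E s) ->
  1 - T%:R * epsS G (c / 2) <= Pr_traj G p beta T E.
Proof.
move=> hE; have -> : Pr_traj G p beta T E = W G p beta T finset.set0 E by [].
apply: le_trans (W_le G hp0 hp1 hb _ _ hE).
rewrite W_compl; apply: arith_sub; exact: (W_bad T good_set0).
Qed.

Lemma slow_ev1 (Gsym : symmetric G) T s : all (good G c) s ->
  [forall t : 'I_T.+1, (1 + c) / 2 * (vol G [set: 'I_n]%SET)%:R <= (vol G (Rset s t))%:R].
Proof.
move=> hs; apply/forallP => t; rewrite /Rset /Bset.
apply: (arith_volR (b := (vol G (nth finset.set0 s t))%:R)).
  by rewrite -natrD vol_split.
apply: good_volB => //; exact: all_good_nth.
Qed.

Lemma slow_ev2 (Gsym : symmetric G) T s : all (good G c) s -> tau_gt G s T.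
Proof.
move=> hs; apply/forallP => t; rewrite /hit /Bset -leqNgt -(ler_nat R) natrM.
apply: (arith_hit (c := c)); [exact: ltW | exact: ler0n |].
apply: good_volB => //; exact: all_good_nth.
Qed.
End Slow.

Definition fgood (R : realType) n (G : rel 'I_n) (S : {set 'I_n}) : bool :=
  [forall u, (deg G u)%:R / 2 < (nbB G S u)%:R :> R].

Lemma arith_f1 (R : realType) (x y d : R) : x + y = d -> d / 2 < x -> y < x.
Proof. move=> h1 h2; lra. Qed.

Lemma arith_f2 (R : realType) (x y d p g : R) : x + y = d -> x <= d / 2 -> g = p - 1/2 ->
  (1 - p + g) * d <= y.
Proof. move=> h1 h2 ->; lra. Qed.

Lemma arith_f3 (R : realType) (x d : R) : d / 2 < x -> d < 2 * x.
Proof. move=> h; lra. Qed.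

Lemma arith_f4 (R : realType) (p g : R) : g = p - 1/2 -> p <= 1 -> g <= 2.
Proof. move=> -> h; lra. Qed.

Lemma not_setT n (z : {set 'I_n}) : z != [set: 'I_n]%SET -> exists u, u \notin z.
Proof.
move=> hz; apply/existsP; apply: contraR hz => /existsPn h.
apply/eqP/setP => u; rewrite !inE; have := h u; by rewrite negbK.
Qed.

Section Fast.
Context (R : realType) (n : nat) (G : rel 'I_n) (p : R) (beta : 'I_n -> {set 'I_n} -> R).
Context (hp0 : 0 <= p) (hp1 : p <= 1) (hb : forall u S, 0 <= beta u S <= 1).
Context (g : R) (hg : g = p - 1/2) (hg0 : 0 < g).
Context (hdeg : forall u, (0 < deg G u)%N).

Lemma kernel0 y : Defs.kernel G p beta finset.set0 y = \prod_u (if u \in y then p else 1 - p).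
Proof.
apply: eq_bigr => u _; rewrite qB_maj0 //.
by rewrite /nbB /nbR finset.setI0 finset.setD0 cards0; exact: hdeg.
Qed.

Lemma fgood_kernel y z : fgood R G y -> z != [set: 'I_n]%SET ->
  Defs.kernel G p beta y z = 0.
Proof.
move=> /forallP hy /not_setT [u hu]; rewrite /Defs.kernel (bigD1 u) //= (negbTE hu).
rewrite qB_maj1 ?subrr ?mul0r // -(ltr_nat R).
apply: (arith_f1 (d := (deg G u)%:R)); last exact: hy.
by rewrite -natrD nbBR.
Qed.

Lemma fbad_bound :
  \sum_y Defs.kernel G p beta finset.set0 y * (~~ fgood R G y)%:R <= epsS G g.
Proof.
apply: (@le_trans _ _ (\sum_y Defs.kernel G p beta finset.set0 y *
   \sum_u ((1 - p + g) * (deg G u)%:R <= (nbR G y u)%:R)%R%:R)).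
  apply: ler_sum => y _; apply: ler_wpM2l; first exact: kernel_ge0.
  apply: le_trans (sum_neg_le _ _) _; apply: ler_sum => u _.
  case: (boolP ((deg G u)%:R / 2 < (nbB G y u)%:R)) => h /=; first exact: ler0n.
  rewrite -leNgt in h.
  have -> : ((1 - p + g) * (deg G u)%:R <= (nbR G y u)%:R) = true => //.
  apply/idP/(arith_f2 (x := (nbB G y u)%:R)) => //.
  by rewrite -natrD nbBR.
under eq_bigr do rewrite big_distrr.
rewrite exchange_big; apply: ler_sum => u _.
under eq_bigr do rewrite kernel0.
rewrite (reindex_inj (@finset.setC_inj _)) /=.
under eq_bigr => y _.
  rewrite /nbR finset.setDE finset.setCK.
  under eq_bigr do rewrite finset.in_setC if_neg.
  over.
apply: (chernoff_bd (a := fun _ => 1 - p) (b := fun _ => p)) => //.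
- by move=> _; rewrite subr_ge0.
- by move=> v; rewrite subrK.
- by rewrite subr_ge0.
- by rewrite lerBlDr lerDl.
- exact: (arith_f4 hg hp1).
Qed.

Lemma fast_ev1 :
  1 - epsS G g <= Pr_traj G p beta 2
     (fun x => vol G (Bset x 2) == vol G [set: 'I_n]%SET).
Proof.
have -> : Pr_traj G p beta 2 (fun x => vol G (Bset x 2) == vol G [set: 'I_n]%SET) =
  W G p beta 2 finset.set0 (fun x => vol G (Bset x 2) == vol G [set: 'I_n]%SET) by [].
rewrite W_cons; apply: le_trans (kernel_lb G hp0 hp1 hb _ (P := fgood R G) _ _).
- apply: arith_sub; exact: fbad_bound.
- by move=> y; exact: W_ge0.
move=> y hy; rewrite W_cons -(kernel_sum1 G p beta y) le_eqVlt; apply/orP; left.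
apply/eqP/eq_bigr => z _; rewrite W_nil.
case: (eqVneq z [set: 'I_n]%SET) => [->|hz]; first by rewrite /Bset /= eqxx mulr1.
by rewrite fgood_kernel // !mul0r.
Qed.

Lemma fast_ev2 (Gsym : symmetric G) (hn : (0 < n)%N) :
  1 - epsS G g <= Pr_traj G p beta 1 (fun x => tau_eq G x 1).
Proof.
have -> : Pr_traj G p beta 1 (fun x => tau_eq G x 1) =
  W G p beta 1 finset.set0 (fun x => tau_eq G x 1) by [].
rewrite W_cons; apply: le_trans (kernel_lb G hp0 hp1 hb _ (P := fgood R G) _ _).
- apply: arith_sub; exact: fbad_bound.
- by move=> y; exact: W_ge0.
move=> y /forallP hy; rewrite W_nil.
have -> : tau_eq G [:: finset.set0; y] 1 => //.
rewrite /tau_eq; apply/andP; split.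
  rewrite /hit /Bset /= -(ltr_nat R) natrM vol_setT vol_nbB // !natr_sum mulr_sumr.
  pose u0 : 'I_n := Ordinal hn.
  rewrite (bigD1 u0) // [X in _ < X](bigD1 u0) //=; apply: ltr_leD.
    exact: arith_f3.
  apply: ler_sum => u _; apply/ltW; exact: arith_f3.
apply/forallP => s; rewrite (ord1 s) /hit /Bset /= /vol big_set0 muln0.
by [].
Qed.
End Fast.

Lemma to1 (R : realType) (f : nat -> R) :
  (\forall n \near \oo, 1 - n%:R^-1 <= f n <= 1) -> f n @[n --> \oo] --> (1 : R).
Proof.
move=> H; apply/cvgrPdist_le => e e0.
have H2 := nbhs_infty_ger (e^-1).
apply: filterS2 H H2 => m /andP[h1 h2] h3.
have m0 : 0 < m%:R :> R by apply: lt_le_trans h3; rewrite invr_gt0.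
have : m%:R^-1 <= e by rewrite -[e]invrK lef_pV2 ?posrE ?invr_gt0.
rewrite ger0_norm ?subr_ge0 //; lra.
Qed.

Lemma eps_le (R : realType) n (G : rel 'I_n) (a M : R) : 0 <= a ->
  (forall u, M * ln (n%:R : R) <= (deg G u)%:R) ->
  \sum_u expR (- a * (deg G u)%:R) <= n%:R * expR (- (a * M) * ln (n%:R : R)).
Proof.
move=> a0 hd; apply: (@le_trans _ _ (\sum_(u : 'I_n) expR (- (a * M) * ln (n%:R : R)))).
  apply: ler_sum => u _; rewrite ler_expR mulNr mulNr lerN2 -mulrA.
  by apply: ler_wpM2l.
by rewrite sumr_const card_ord mulr_natl.
Qed.

Lemma ln_pow (R : realType) (x k : R) : 0 < x ->
  x * expR (- (k + 1) * ln x) = expR (- k * ln x).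
Proof.
move=> x0; rewrite -{1}(lnK x0) -expRD; congr expR; ring.
Qed.

Lemma expR_m1 (R : realType) (x : R) : 0 < x -> expR (- 1 * ln x) = x^-1.
Proof. by move=> x0; rewrite mulN1r expRN lnK. Qed.

Lemma deg_pos (R : realType) n (G : rel 'I_n) (M : R) : 0 < M -> (2 <= n)%N ->
  (forall u, M * ln (n%:R : R) <= (deg G u)%:R) -> forall u, (0 < deg G u)%N.
Proof.
move=> M0 n2 hd u; rewrite -(ltr_nat R); apply: lt_le_trans (hd u).
apply: mulr_gt0 => //; apply: ln_gt0; by rewrite ltr1n.
Qed.

Lemma fast_n (R : realType) n (G : rel 'I_n) (g M : R) : 0 < g -> M = 16 / g ^+ 2 ->
  (2 <= n)%N -> (forall u, M * ln (n%:R : R) <= (deg G u)%:R) -> epsS G g <= n%:R^-1.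
Proof.
move=> g0 hM n2 hd; have n0 : 0 < n%:R :> R by rewrite ltr0n; apply: leq_trans n2.
apply: le_trans (eps_le (a := g ^+ 2 / 8) _ hd) _.
  by apply: divr_ge0 => //; exact: sqr_ge0.
have -> : g ^+ 2 / 8 * M = 1 + 1.
  rewrite hM; field; exact: lt0r_neq0.
by rewrite ln_pow // expR_m1.
Qed.

Lemma slow_n (R : realType) n (G : rel 'I_n) (c K M : R) : 0 < c -> 0 < K ->
  M = 32 * (K + 2) / c ^+ 2 ->
  (2 <= n)%N -> (forall u, M * ln (n%:R : R) <= (deg G u)%:R) ->
  (Num.truncn ((n%:R : R) `^ K))%:R * epsS G (c / 2) <= n%:R^-1.
Proof.
move=> c0 K0 hM n2 hd; have n0 : 0 < n%:R :> R by rewrite ltr0n; apply: leq_trans n2.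
have e1 : epsS G (c / 2) <= expR (- (K + 1) * ln (n%:R : R)).
  apply: le_trans (eps_le (a := (c / 2) ^+ 2 / 8) _ hd) _.
    by apply: divr_ge0 => //; exact: sqr_ge0.
  have -> : (c / 2) ^+ 2 / 8 * M = (K + 1) + 1.
    rewrite hM; field; exact: lt0r_neq0.
  by rewrite ln_pow.
have t1 : (Num.truncn ((n%:R : R) `^ K))%:R <= expR (K * ln (n%:R : R)).
  have := truncn_le ((n%:R : R) `^ K); rewrite powR_ge0 => h.
  by apply: le_trans h _; rewrite /powR gt_eqF.
apply: le_trans (ler_pM _ _ t1 e1) _; first exact: ler0n.
  exact: epsS_ge0.
rewrite -expRD -expR_m1 // le_eqVlt; apply/orP; left; apply/eqP; congr expR; ring.
Qed.

Lemma Pr_le1 (R : realType) n (G : rel 'I_n) (p : R) beta T E :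
  0 <= p -> p <= 1 -> (forall u S, 0 <= beta u S <= 1) -> Pr_traj G p beta T E <= 1.
Proof. move=> h0 h1 hb; exact: (W_le1 G h0 h1 hb T finset.set0 E). Qed.

Lemma arith_c (R : realType) (p : R) : 0 <= p -> 1/2 - p <= 1 /\ 1/2 - p <= 4.
Proof. move=> h; split; lra. Qed.

Unset Implicit Arguments.

Theorem proposition6p3 (R : realType) (G : forall n : nat, rel 'I_n)
  (Gsym : forall n, symmetric (G n)) (Girr : forall n, irreflexive (G n))
  (Hmindeg : forall M : R, 0 < M ->
     \forall n \near \oo, forall u : 'I_n, M * ln (n%:R : R) <= (deg (G n) u)%:R)
  (p : R) (hp0 : 0 <= p) (hp1 : p <= 1)
  (beta : forall n : nat, 'I_n -> {set 'I_n} -> R)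
  (hbeta : forall n u S, 0 <= beta n u S <= 1) :
  (1 / 2 < p ->
     (fun n => Pr_traj (G n) p (beta n) 2
        (fun x => vol (G n) (Bset x 2) == vol (G n) [set: 'I_n]%SET)) @ \oo --> (1 : R)
   /\ (fun n => Pr_traj (G n) p (beta n) 1
        (fun x => tau_eq (G n) x 1)) @ \oo --> (1 : R))
  /\
  (p < 1 / 2 -> forall K : R, 0 < K ->
     let c := 1 / 2 - p in
     (fun n => Pr_traj (G n) p (beta n) (Num.truncn ((n%:R : R) `^ K))
        (fun x => [forall t : 'I_(Num.truncn ((n%:R : R) `^ K)).+1,
           (1 + c) / 2 * (vol (G n) [set: 'I_n]%SET)%:R
             <= (vol (G n) (Rset x t))%:R])) @ \oo --> (1 : R)
   /\ (fun n => Pr_traj (G n) p (beta n) (Num.truncn ((n%:R : R) `^ K))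
        (fun x => tau_gt (G n) x (Num.truncn ((n%:R : R) `^ K)))) @ \oo --> (1 : R)).
Proof.
split.
- move=> hp.
  have hg0 : 0 < p - 1/2 by rewrite subr_gt0.
  pose M := 16 / (p - 1/2) ^+ 2.
  have hM : 0 < M by apply: divr_gt0 => //; exact: exprn_gt0.
  have HM := Hmindeg M hM.
  split; apply: to1; apply: filterS2 HM (nbhs_infty_ge 2) => m hd hm2;
    have hdeg := deg_pos hM hm2 hd; (apply/andP; split; last exact: Pr_le1).
  + apply: le_trans (arith_sub (fast_n hg0 (erefl M) hm2 hd)) _.
    exact: (fast_ev1 hp0 hp1 (hbeta m) (erefl _) hg0 hdeg).
  + apply: le_trans (arith_sub (fast_n hg0 (erefl M) hm2 hd)) _.
    apply: (fast_ev2 hp0 hp1 (hbeta m) (erefl _) hg0 hdeg (Gsym m)).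
    by apply: leq_trans hm2.
- move=> hp K hK c.
  have hcp : c = 1/2 - p by [].
  have hc0 : 0 < c by rewrite hcp subr_gt0.
  have [hc1 hc2] : c <= 1 /\ c <= 4 by rewrite hcp; exact: arith_c.
  clearbody c.
  pose M := 32 * (K + 2) / c ^+ 2.
  have hM : 0 < M.
    apply: divr_gt0; last exact: exprn_gt0.
    by apply: mulr_gt0 => //; apply: addr_gt0.
  have HM := Hmindeg M hM.
  split; apply: to1; apply: filterS2 HM (nbhs_infty_ge 2) => m hd hm2;
    have hdeg := deg_pos hM hm2 hd; (apply/andP; split; last exact: Pr_le1);
    (apply: le_trans (arith_sub (slow_n hc0 hK (erefl M) hm2 hd)) _;
     apply: (slow_core hp0 hp1 (hbeta m) hcp hc0 hc1 hc2 hdeg) => s hs).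
  + by have := slow_ev1 hc1 (Gsym m) (Num.truncn ((m%:R : R) `^ K)) hs.
  + by have := slow_ev2 hc0 hc1 (Gsym m) (Num.truncn ((m%:R : R) `^ K)) hs.
Qed.
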